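(* Let $S$ be a polynomial ring over a field and let $I$, $J \subseteq S$ be ideals that can be written as $I = L_I + Q_I$ and $J = L_J + Q_J$, where (1) $L_I$ and $L_J$ are generated by disjoint sets of variables; (2) $Q_J$ is generated by quadratic monomials, none of which is divisible by a generator of $L_J$; (3) $Q_I \subseteq J$; (4) $Q_J \subseteq I$. Then $I \cap J = L_IL_J + Q_I + Q_J$. *)

(* Defs.v *)
From mathcomp Require Import all_boot all_algebra.
From mathcomp Require Import mpoly.
Set Implicit Arguments. Unset Strict Implicit. Unset Printing Implicit Defensive.
Import GRing.Theory.
Local Open Scope ring_scope.

Section IdealDefs.
Variables (n : nat) (R : fieldType).
Local Notation P := {mpoly R[n]}.

Definition is_ideal (I : P -> Prop) : Prop :=
  [/\ I 0, (forall f g, I f -> I g -> I (f + g)) & (forall a f, I f -> I (a * f))].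

Definition ideal_gen (G : P -> Prop) (f : P) : Prop :=
  exists s : seq (P * P), (forall p, p \in s -> G p.2) /\ f = \sum_(p <- s) p.1 * p.2.

Definition ideal_sum (I J : P -> Prop) : P -> Prop :=
  ideal_gen (fun f => I f \/ J f).

Definition ideal_prod (I J : P -> Prop) : P -> Prop :=
  ideal_gen (fun f => exists a b, [/\ I a, J b & f = a * b]).

Definition var_ideal (A : {set 'I_n}) : P -> Prop :=
  ideal_gen (fun f => exists2 i, i \in A & f = 'X_i).

Definition mdivides (g f : P) : Prop := exists q : P, f = q * g.
End IdealDefs.

(* Main.v *)
Require Import Defs.
From mathcomp Require Import all_boot all_algebra.
From mathcomp Require Import mpoly.
Import GRing.Theory.
Local Open Scope ring_scope.

Section Helpers.
Variables (n : nat) (R : fieldType).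
Local Notation P := {mpoly R[n]}.

Lemma gen_ideal (G : P -> Prop) : is_ideal (ideal_gen G).
Proof.
split.
- by exists [::]; split => //; rewrite big_nil.
- move=> f g [s1 [h1 ->]] [s2 [h2 ->]]; exists (s1 ++ s2); split.
    by move=> p; rewrite mem_cat => /orP [/h1|/h2].
  by rewrite big_cat.
- move=> a f [s [h ->]]; exists [seq (a * p.1, p.2) | p <- s]; split.
    by move=> p /mapP [q hq ->] /=; apply: h.
  rewrite big_map mulr_sumr; apply: eq_bigr => p _ /=; by rewrite mulrA.
Qed.

Lemma gen_in (G : P -> Prop) g : G g -> ideal_gen G g.
Proof.
by move=> hg; exists [:: (1, g)]; split; [move=> p; rewrite mem_seq1 => /eqP -> | rewrite big_seq1 mul1r].
Qed.

Lemma ideal_seq (K : P -> Prop) (T : eqType) (s : seq T) (F : T -> P) :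
  is_ideal K -> (forall x, x \in s -> K (F x)) -> K (\sum_(x <- s) F x).
Proof.
case=> h0 hD hM; elim: s => [|x s ih] h; first by rewrite big_nil.
rewrite big_cons; apply: hD; first by apply: h; rewrite mem_head.
by apply: ih => y hy; apply: h; rewrite inE hy orbT.
Qed.

Lemma gen_min (G K : P -> Prop) f :
  is_ideal K -> (forall g, G g -> K g) -> ideal_gen G f -> K f.
Proof.
move=> hK hG [s [hs ->]]; apply: ideal_seq => // p hp.
case: hK => _ _ hM; apply: hM; apply: hG; exact: hs.
Qed.

Lemma ideal_mulr (K : P -> Prop) a f : is_ideal K -> K f -> K (a * f).
Proof. by case=> _ _ h; apply: h. Qed.

Lemma ideal_add (K : P -> Prop) f g : is_ideal K -> K f -> K g -> K (f + g).
Proof. by case=> _ h _; apply: h. Qed.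

Lemma ideal_sub (K : P -> Prop) f g : is_ideal K -> K f -> K g -> K (f - g).
Proof.
move=> hK hf hg; apply: ideal_add => //; rewrite -mulN1r; exact: ideal_mulr.
Qed.

Lemma sum_split (X Y : P -> Prop) f : is_ideal X -> is_ideal Y ->
  ideal_sum X Y f -> exists a b, [/\ X a, Y b & f = a + b].
Proof.
move=> [x0 xD xM] [y0 yD yM] hf.
refine (@gen_min _ (fun f0 => exists a b, [/\ X a, Y b & f0 = a + b]) f _ _ hf).

- split.
  + by exists 0, 0; split => //; rewrite addr0.
  + move=> f1 f2 [a1 [b1 [ha1 hb1 ->]]] [a2 [b2 [ha2 hb2 ->]]].
    exists (a1 + a2), (b1 + b2); split; [exact: xD|exact: yD|].
    by rewrite addrACA.
  + move=> c f1 [a1 [b1 [ha1 hb1 ->]]]; exists (c * a1), (c * b1).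
    by split; [exact: xM|exact: yM|rewrite mulrDr].
- move=> g [hg|hg]; first by exists g, 0; split => //; rewrite addr0.
  by exists 0, g; split => //; rewrite add0r.
Qed.

Lemma mono_supp (Pm : 'X_{1..n} -> Prop) (f : P) :
  ideal_gen (fun g => exists2 m, Pm m & g = 'X_[m]) f ->
  forall u, u \in msupp f -> exists2 m, Pm m & (m <= u)%MM.
Proof.
move=> [s [hs ->]] u /msupp_sum_le /flattenP [l /mapP [p hp ->] hu].
rewrite mem_filter /= in hp.
have [m hm e] := hs p hp; move: hu; rewrite /= e (perm_mem (msuppMX p.1 m)) => /mapP [m' _ ->].

by exists m => //; apply: lem_addr.
Qed.

End Helpers.

Theorem lemma1p5 (n : nat) (R : fieldType)
  (A B : {set 'I_n})                       (* L_I = (x_i : i in A), L_J = (x_j : j in B) *)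
  (QI : {mpoly R[n]} -> Prop)              (* Q_I, an ideal *)
  (M : 'X_{1..n} -> Prop)                  (* quadratic monomials generating Q_J *)
  (hAB : [disjoint A & B])
  (hQI : is_ideal QI)
  (hM : forall m, M m ->
          mdeg m = 2%N /\ (forall j, j \in B -> ~ mdivides 'X_j ('X_[m] : {mpoly R[n]})))
  (QJ := ideal_gen (fun f : {mpoly R[n]} => exists2 m, M m & f = 'X_[m]))
  (LI := @var_ideal n R A) (LJ := @var_ideal n R B)
  (I := ideal_sum LI QI) (J := ideal_sum LJ QJ)
  (hQIJ : forall f, QI f -> J f)
  (hQJI : forall f, QJ f -> I f) :
  forall f, (I f /\ J f) <-> ideal_sum (ideal_prod LI LJ) (ideal_sum QI QJ) f.
Proof.
set T := ideal_sum _ _.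
have hT : is_ideal T by apply: gen_ideal.
have hI : is_ideal I by apply: gen_ideal.
have hJ : is_ideal J by apply: gen_ideal.
have hLI : is_ideal LI by apply: gen_ideal.
have LII : forall g, LI g -> I g by move=> g hg; apply: gen_in; left.
have LJJ : forall g, LJ g -> J g by move=> g hg; apply: gen_in; left.
have QJJ : forall g, QJ g -> J g by move=> g hg; apply: gen_in; right.
have QII : forall g, QI g -> I g by move=> g hg; apply: gen_in; right.
have QJT : forall g, QJ g -> T g by move=> g hg; apply: gen_in; right; apply: gen_in; right.
have QIT : forall g, QI g -> T g by move=> g hg; apply: gen_in; right; apply: gen_in; left.
move=> f; split.
- move=> [If Jf].
  have [a [b [ha hb ef]]] := @sum_split _ _ _ _ _ hLI hQI If.
  have Ja : J a by rewrite (_ : a = f - b); [apply: ideal_sub => //; exact: hQIJ| rewrite ef addrK].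
  rewrite ef; apply: ideal_add => //; last exact: QIT.
  have h1 := @mono_supp n R (fun m => exists2 i, i \in A & m = U_(i)%MM) a.
  have h2 := @mono_supp n R (fun m => (exists2 j, j \in B & m = U_(j)%MM) \/ M m) a.
  have {}h1 : forall u, u \in msupp a -> exists2 m, (exists2 i, i \in A & m = U_(i)%MM) & (m <= u)%MM.
    apply: h1; apply: gen_min ha; first exact: gen_ideal.
    by move=> g [i hi ->]; apply: gen_in; exists U_(i)%MM => //; exists i.
  have {}h2 : forall u, u \in msupp a -> exists2 m, ((exists2 j, j \in B & m = U_(j)%MM) \/ M m) & (m <= u)%MM.
    apply: h2; apply: gen_min Ja; first exact: gen_ideal.
    move=> g [hg|hg].
      apply: gen_min hg; first exact: gen_ideal.
      by move=> g' [j hj ->]; apply: gen_in; exists U_(j)%MM => //; left; exists j.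
    apply: gen_min hg; first exact: gen_ideal.
    by move=> g' [m hm ->]; apply: gen_in; exists m => //; right.
  rewrite (mpolyE a); apply: ideal_seq => // u hu.
  rewrite -mul_mpolyC; apply: ideal_mulr => //.
  have [m1 [i hi ->] le1] := h1 u hu.
  have [m2 [[j hj ->]|hm2] le2] := h2 u hu.
  + have hij : i != j.
      by apply/eqP => eij; move: (disjointFr hAB hi); rewrite eij hj.
    have le : (U_(i) + U_(j) <= u)%MM.
      apply/mnm_lepP => k; rewrite mnmDE !mnm1E.
      have := mnm_lepP le1 k; have := mnm_lepP le2 k.
      have := mnm_lepP le1 i; have := mnm_lepP le2 j.
      rewrite !mnm1E !eqxx.
      have hji : (j == i) = false by rewrite eq_sym (negbTE hij).
      case: (i =P k) => [eik|/eqP nik]; case: (j =P k) => [ejk|/eqP njk].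
      * by move: hij; rewrite eik ejk eqxx.
      * by subst k => *.
      * by subst k => *.
      * by move=> *.
    rewrite -(submK le) mpolyXD mpolyXD; apply: ideal_mulr => //.
    apply: gen_in; left; apply: gen_in; exists 'X_i, 'X_j; split => //.
      by apply: gen_in; exists i.
    by apply: gen_in; exists j.
  + rewrite -(submK le2) mpolyXD; apply: ideal_mulr => //.
    by apply: QJT; apply: gen_in; exists m2.
- move=> hf; split.
  + apply: gen_min hf => // g [hg|hg].
      apply: gen_min hg => // g' [x [y [hx hy ->]]].
      by rewrite mulrC; apply: ideal_mulr => //; apply: LII.
    apply: gen_min hg => // g' [hg'|hg']; [exact: QII|exact: hQJI].
  + apply: gen_min hf => // g [hg|hg].
      apply: gen_min hg => // g' [x [y [hx hy ->]]].
      by apply: ideal_mulr => //; apply: LJJ.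
    apply: gen_min hg => // g' [hg'|hg']; [exact: hQIJ|exact: QJJ].
Qed.
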